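(* Let $h(p):=-s_\phi(p,p)$, $C:=\mathbb{E}[Q\mid S]$, and let $S_B$ be a binned version of $S$. Then $$\underbrace{\mathbb{E}[\mathrm{Var}_h(Q\mid S_B)]}_{\mathrm{GL}(S_B)}=\underbrace{\mathbb{E}[\mathrm{Var}_h(Q\mid S)]}_{\mathrm{GL}(S)}+\underbrace{\mathbb{E}[\mathrm{Var}_h(C\mid S_B)]}_{\mathrm{GL}_{\mathrm{induced}}(S,S_B)}.$$ Moreover, if the scoring rule $\phi$ is proper, then $\mathrm{GL}_{\mathrm{induced}}(S,S_B)\ge0$.
   Context: Let $(X,Y)$ be jointly distributed with $X\in\mathcal{X}$ and $Y\in\{e_1,\dots,e_K\}$ (one-hot vectors of $\mathbb{R}^K$); $\Delta_K$ is the probability simplex; $Q\in\Delta_K$ with $Q_k:=P(Y=e_k\mid X)$; $S=f(X)\in\Delta_K$ for a classifier $f$. A scoring rule is $\phi:\Delta_K\times\{e_1,\dots,e_K\}\to\mathbb{R}$, with $s_\phi(P,q):=\sum_k\phi(P,e_k)q_k$ and $d_\phi(P,q):=s_\phi(P,q)-s_\phi(q,q)$; $\phi$ is proper if $d_\phi\ge0$. For $f:\mathbb{R}^d\to\mathbb{R}$, $\mathrm{Var}_f(U\mid V):=\mathbb{E}[f(U)\mid V]-f(\mathbb{E}[U\mid V])$. Binned classifier: given a partition $\{\mathcal{B}_j\}_{1\le j\le J}$ of $\Delta_K$, $S_B$ is the random variable equal to $\mathbb{E}[S\mid S\in\mathcal{B}_j]$ on the event $\{S\in\mathcal{B}_j\}$.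 All required expectations are assumed to exist. *)

(* Defs.v *)
From HB Require Import structures.
From mathcomp Require Import all_boot all_order all_algebra.
From mathcomp Require Import all_classical all_reals all_analysis.
Set Implicit Arguments. Unset Strict Implicit. Unset Printing Implicit Defensive.
Import Order.TTheory GRing.Theory Num.Theory.
Import numFieldNormedType.Exports.
Local Open Scope classical_set_scope.
Local Open Scope ring_scope.

Section Defs.
Variable R : realType.

Definition simplex (K : nat) : set ('I_K -> R) :=
  [set p | (forall k, 0 <= p k) /\ \sum_(k < K) p k = 1].
Arguments simplex : clear implicits.

(* Borel sigma-algebra of R^K : generated by the coordinate projections
   (= product Borel sigma-algebra = Borel sets of R^K). *)
Definition borelK (K : nat) : set (set ('I_K -> R)) :=
  <<s [set (fun p : 'I_K -> R => p k) @^-1` A | k in [set: 'I_K] & A in (@measurable _ R)] >>.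
Arguments borelK : clear implicits.

Definition sigma_rv {d'} {T : Type} {U : measurableType d'} (Z : T -> U)
  : set (set T) := [set Z @^-1` A | A in (@measurable _ U)].
Definition sigma_rvK {T : Type} {K : nat} (Z : T -> 'I_K -> R)
  : set (set T) := [set Z @^-1` A | A in borelK K].

(* Scoring rule phi : Delta_K x {e_1..e_K} -> R; phi P k stands for phi(P, e_k). *)
Definition s_phi (K : nat) (phi : ('I_K -> R) -> 'I_K -> R) (P q : 'I_K -> R) : R :=
  \sum_(k < K) phi P k * q k.
Definition d_phi (K : nat) (phi : ('I_K -> R) -> 'I_K -> R) (P q : 'I_K -> R) : R :=
  s_phi phi P q - s_phi phi q q.
Definition proper_scoring (K : nat) (phi : ('I_K -> R) -> 'I_K -> R) : Prop :=
  forall P q, simplex K P -> simplex K q -> 0 <= d_phi phi P q.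
Definition hphi (K : nat) (phi : ('I_K -> R) -> 'I_K -> R) (p : 'I_K -> R) : R :=
  - s_phi phi p p.

Variables (d : measure_display) (T : measurableType d).

Definition is_cexp (P : probability T R) (G : set (set T)) (U V : T -> R) : Prop :=
  [/\ P.-integrable setT (EFin \o U), P.-integrable setT (EFin \o V),
      (forall B : set R, measurable B -> G (V @^-1` B)) &
      (forall A, G A -> (\int[P]_(t in A) (U t)%:E = \int[P]_(t in A) (V t)%:E)%E)].

Definition is_cexpK (K : nat) (P : probability T R) (G : set (set T))
  (U V : T -> 'I_K -> R) : Prop :=
  forall k, is_cexp P G (fun t => U t k) (fun t => V t k).

(* Binned classifier: S_B = E[S | S in B_j] on the event {S in B_j}. *)
Definition bin_mean (K J : nat) (P : probability T R) (S : T -> 'I_K -> R)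
  (B : 'I_J -> set ('I_K -> R)) (j : 'I_J) (k : 'I_K) : R :=
  fine (\int[P]_(t in S @^-1` B j) (S t k)%:E) / fine (P (S @^-1` B j)).
Definition binned (K J : nat) (P : probability T R) (S : T -> 'I_K -> R)
  (B : 'I_J -> set ('I_K -> R)) : T -> 'I_K -> R :=
  fun t k => \sum_(j < J) \1_(S @^-1` B j) t * bin_mean P S B j k.

End Defs.
Arguments simplex {R} K.
Arguments borelK {R} K.

(* Main.v *)
Require Import Defs.
From HB Require Import structures.
From mathcomp Require Import all_boot all_order all_algebra.
From mathcomp Require Import all_classical all_reals all_analysis.
From mathcomp Require Import measurable_realfun.
Import Order.TTheory GRing.Theory Num.Theory.
Import numFieldNormedType.Exports.
Local Open Scope classical_set_scope.
Local Open Scope ring_scope.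
Section Gen.
Context {R : realType} {d : measure_display} {T : measurableType d} (P : probability T R).

Lemma neg_negligible (G : set (set T)) (V : T -> R) :
  (forall A, G A -> measurable A) ->
  (forall B, measurable B -> G (V @^-1` B)) ->
  P.-integrable setT (EFin \o V) ->
  (forall A, G A -> (0 <= \int[P]_(t in A) (V t)%:E)%E) ->
  P.-negligible [set t | V t < 0].
Proof.
move=> hGm hV hint hA.
set A := V @^-1` `]-oo, 0[.
have GA : G A by apply: hV; exact: measurable_itv.
have mA := hGm _ GA.
have iA : P.-integrable A (EFin \o V) by exact: integrableS hint.
have mV : measurable_fun A (EFin \o V) by case/integrableP: iA.
have e1 : (\int[P]_(t in A) `|(V t)%:E| = - \int[P]_(t in A) (V t)%:E)%E.
  rewrite -integralN; last first.
    apply: fin_num_adde_defl; rewrite fin_numN ge0_fin_numE.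
      exact: (integral_funeneg_lt_pinfty mA iA).
    by apply: integral_ge0 => t _; exact: funeneg_ge0.
  apply: eq_integral => t /set_mem; rewrite /A /= in_itv /= => Vt.
  by rewrite ltr0_norm.
have e0 : (\int[P]_(t in A) `|(V t)%:E| = 0)%E.
  apply/eqP; rewrite eq_le; apply/andP; split; last exact: integral_ge0.
  by rewrite e1 leeNl oppe0; exact: hA.
have [N [mN PN sN]] := (ae_eq_integral_abs P mA mV).1 e0.
exists N; split => // t /= Vt; apply: sN => /=; apply/not_implyP; split.
  by rewrite /A /= in_itv /=.
by move=> [] /eqP; rewrite lt_eqF.
Qed.
End Gen.
Section Gen2.
Context {R : realType} {d : measure_display} {T : measurableType d}.

Definition Gmeas (G : set (set T)) (V : T -> R) :=
  forall B : set R, measurable B -> G (V @^-1` B).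

Lemma GmeasP (G : set (set T)) (V : T -> R) : sigma_algebra setT G ->
  Gmeas G V <-> measurable_fun (setT : set (g_sigma_algebraType G)) (V : g_sigma_algebraType G -> R).
Proof.
move=> sG; split.
  move=> hV _ B mB; rewrite setTI; apply: sub_gen_smallest; exact: hV.
move=> hV B mB; have := hV measurableT B mB; rewrite setTI.
by rewrite /measurable /= (sigma_algebra_id sG).
Qed.

Lemma GmeasB G V1 V2 : sigma_algebra setT G -> Gmeas G V1 -> Gmeas G V2 ->
  Gmeas G (fun t => V1 t - V2 t).
Proof.
move=> sG /(GmeasP _ _ sG) h1 /(GmeasP _ _ sG) h2; apply/(GmeasP _ _ sG).
exact: measurable_funB.
Qed.

Lemma GmeasSum G (I : finType) (V : I -> T -> R) : sigma_algebra setT G ->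
  (forall i, Gmeas G (V i)) -> Gmeas G (fun t => \sum_i V i t).
Proof.
move=> sG h; apply/(GmeasP _ _ sG).
apply: (@measurable_sum _ (g_sigma_algebraType G)) => i.
exact/(GmeasP _ _ sG).
Qed.

Lemma GmeasC G (c : R) : sigma_algebra setT G -> Gmeas G (fun _ => c).
Proof. move=> sG; apply/(GmeasP _ _ sG); exact: measurable_cst. Qed.

End Gen2.
Section Gen3.
Context {R : realType} {d : measure_display} {T : measurableType d} (P : probability T R).

Lemma ae_eq_G (G : set (set T)) (V1 V2 : T -> R) :
  (forall A, G A -> measurable A) -> sigma_algebra setT G ->
  Gmeas G V1 -> Gmeas G V2 ->
  P.-integrable setT (EFin \o V1) -> P.-integrable setT (EFin \o V2) ->
  (forall A, G A -> (\int[P]_(t in A) (V1 t)%:E = \int[P]_(t in A) (V2 t)%:E)%E) ->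
  P.-negligible [set t | V1 t != V2 t].
Proof.
move=> hGm sG h1 h2 i1 i2 hA.
have key : forall W1 W2 : T -> R, Gmeas G W1 -> Gmeas G W2 ->
  P.-integrable setT (EFin \o W1) -> P.-integrable setT (EFin \o W2) ->
  (forall A, G A -> (\int[P]_(t in A) (W1 t)%:E = \int[P]_(t in A) (W2 t)%:E)%E) ->
  P.-negligible [set t | W1 t - W2 t < 0].
  move=> W1 W2 g1 g2 j1 j2 hW.
  apply: (@neg_negligible _ _ _ P G) => //.
  - exact: GmeasB.
  - rewrite (_ : _ \o _ = (fun t => (W1 t)%:E - (W2 t)%:E))%E; last by [].
    exact: integrableB.
  - move=> A GA; have mA := hGm _ GA.
    rewrite (_ : (fun t => _) = (fun t => (W1 t)%:E - (W2 t)%:E))%E; last first.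
      by apply/funext => t.
    rewrite integralB_EFin //; first by rewrite hW // subee // integrable_fin_num //; exact: integrableS j2.
    + exact: integrableS j1.
    + exact: integrableS j2.
have n1 := key _ _ h1 h2 i1 i2 hA.
have n2 := key _ _ h2 h1 i2 i1 (fun A GA => esym (hA A GA)).
apply: negligibleS (negligibleU n1 n2) => t /= /eqP.
move=> ne; case: (ltgtP (V1 t) (V2 t)) => h.
- by left; rewrite /= subr_lt0.
- by right; rewrite /= subr_lt0.
- by case: ne.
Qed.
End Gen3.
Lemma in_bigsetI {U : Type} (I : finType) (F : I -> set U) x :
  (\big[setI/setT]_(i : I) F i) x <-> forall i, F i x.
Proof.
split.
  by move=> h i; move: h; rewrite (bigD1 i) //= => -[].
by move=> h; elim/big_ind: _ => // A B hA hB; split.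
Qed.

Lemma in_bigsetU {U : Type} (I : finType) (P : pred I) (F : I -> set U) x :
  (\big[setU/set0]_(i | P i) F i) x <-> exists2 i, P i & F i x.
Proof.
split.
  elim/big_rec: _ => // i A Pi IH [Fx|/IH //]; by exists i.
by move=> [i Pi Fx]; rewrite (bigD1 i) //=; left.
Qed.

Section Borel.
Context {R : realType} (K : nat).

Definition gensK : set (set ('I_K -> R)) :=
  [set (fun p : 'I_K -> R => p k) @^-1` A | k in [set: 'I_K] & A in (@measurable _ R)].
Definition BKT := g_sigma_algebraType gensK.

Lemma borelKE (A : set ('I_K -> R)) : @borelK R K A = (measurable : set (set BKT)) A.
Proof. by []. Qed.

Lemma borelK_sigma : sigma_algebra setT (@borelK R K).
Proof. exact: smallest_sigma_algebra. Qed.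

Lemma borelK_set1 (v : 'I_K -> R) : @borelK R K [set v].
Proof.
rewrite borelKE.
have -> : [set v] = \big[setI/setT]_(k < K) ((fun p : 'I_K -> R => p k) @^-1` [set v k]).
  apply/seteqP; split => p /=.
    by move=> ->; apply/in_bigsetI.
  by move/in_bigsetI => h; apply/funext => k; exact: h.
apply: bigsetI_measurable => k _; apply: sub_gen_smallest.
exists k => //; exists [set v k] => //; exact: measurable_set1.
Qed.

End Borel.
Section Sig.
Context {R : realType} {d : measure_display} {T : measurableType d} (K : nat).

Lemma sigma_rvK_sigma (Z : T -> 'I_K -> R) : sigma_algebra setT (sigma_rvK Z).
Proof.
have := @sigma_algebra_preimage _ _ _ setT Z (@borelK_sigma R K).
congr sigma_algebra; apply/seteqP; split => A [B hB <-]; exists B => //.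
  by rewrite setTI.
by rewrite setTI.
Qed.

Lemma sigma_rvK_setT (Z : T -> 'I_K -> R) : sigma_rvK Z setT.
Proof. exists setT; [rewrite borelKE; exact: measurableT | exact: preimage_setT]. Qed.

End Sig.
Section Gen4.
Context {R : realType} {d : measure_display} {T : measurableType d} (P : probability T R).
Lemma negl_ae (N : set T) (Pr : T -> Prop) : P.-negligible N ->
  (forall t, ~ N t -> Pr t) -> {ae P, forall t, Pr t}.
Proof.
move=> hN hP; apply: negligibleS hN => t /= nP; apply: contrapT => nN.
by apply: nP; exact: hP t nN.
Qed.

Lemma negl_bigU (I : finType) (F : I -> set T) :
  (forall i, P.-negligible (F i)) -> P.-negligible (\big[setU/set0]_i F i).
Proof.
move=> hF; elim/big_ind: _ => //; [exact: negligible_set0|].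
by move=> A B; exact: negligibleU.
Qed.
End Gen4.
Section Main.
Context (R : realType) (d : measure_display) (T : measurableType d)
  (P : probability T R)
  (dX : measure_display) (Xsp : measurableType dX) (K J : nat)
  (X : T -> Xsp) (Y : T -> 'I_K)
  (f : Xsp -> 'I_K -> R)
  (phi : ('I_K -> R) -> 'I_K -> R)
  (B : 'I_J -> set ('I_K -> R))
  (Q C mQB mCB : T -> 'I_K -> R)
  (HQB HQS HCB : T -> R).
Hypothesis hX : measurable_fun setT X.
Hypothesis hf : forall x, simplex K (f x).
Hypothesis hfm : forall A, borelK K A -> measurable (f @^-1` A).
Hypothesis hQ : forall t, simplex K (Q t).
Hypothesis hBb : forall j, borelK K (B j).
Hypothesis hBd : forall i j, i != j -> B i `&` B j = set0.
Hypothesis hBc : forall p, simplex K p -> exists j, B j p.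
Let S := fun t => f (X t).
Let SB := binned P S B.
Let h := hphi phi.
Let bm := bin_mean P S B.

Lemma p1 t : exists j, B j (S t).
Proof. exact: hBc (hf (X t)). Qed.

Lemma p2 t i j : B i (S t) -> B j (S t) -> i = j.
Proof.
move=> hi hj; apply/eqP; apply/negPn/negP => ij.
have e := hBd _ _ ij; have : (B i `&` B j) (S t) by split.
by rewrite e.
Qed.

Lemma p3 t j : B j (S t) -> SB t = bm j.
Proof.
move=> hj; apply/funext => k; rewrite /SB /binned (bigD1 j) //= big1.
  by rewrite indicE mem_set // mul1r addr0.
move=> i ij; rewrite indicE memNset ?mul0r //= => hi.
by move/negP: ij; apply; apply/eqP; exact: p2 hi hj.
Qed.

Lemma s2 A : sigma_rvK S A -> measurable A.
Proof.
move=> [A' hA' <-]; have := hX measurableT _ (hfm _ hA').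
by rewrite setTI.
Qed.

Lemma s3 A : sigma_rvK SB A -> sigma_rvK S A.
Proof.
move=> [A' hA' <-].
exists (\big[setU/set0]_(j | `[< A' (bm j) >]) B j).
  rewrite borelKE; apply: bigsetU_measurable => j _; rewrite -borelKE; exact: hBb.
apply/seteqP; split => t /=.
  move/in_bigsetU => [j /asboolP hj Bj].
  by rewrite (p3 _ _ Bj).
move=> h'; have [j Bj] := p1 t; apply/in_bigsetU; exists j => //.
by apply/asboolP; rewrite -(p3 _ _ Bj).
Qed.

Lemma sB A : sigma_rvK SB A -> measurable A.
Proof. by move=> /s3 /s2. Qed.

Hypothesis hC : is_cexpK P (sigma_rvK S) Q C.
Hypothesis hHQB : is_cexp P (sigma_rvK SB) (fun t => h (Q t)) HQB.
Hypothesis hmQB : is_cexpK P (sigma_rvK SB) Q mQB.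
Hypothesis hHQS : is_cexp P (sigma_rvK S) (fun t => h (Q t)) HQS.
Hypothesis hHCB : is_cexp P (sigma_rvK SB) (fun t => h (C t)) HCB.
Hypothesis hmCB : is_cexpK P (sigma_rvK SB) C mCB.
Hypothesis i1 : P.-integrable setT (EFin \o (fun t => h (mQB t))).
Hypothesis i2 : P.-integrable setT (EFin \o (fun t => h (C t))).
Hypothesis i3 : P.-integrable setT (EFin \o (fun t => h (mCB t))).

Lemma mQB_mCB_negl : P.-negligible [set t | mQB t != mCB t].
Proof.
have hk k : P.-negligible [set t | mQB t k != mCB t k].
  case: (hmQB k) => iQ iM gM eM.
  case: (hmCB k) => iC iM' gM' eM'.
  case: (hC k) => _ _ _ eC.
  apply: (@ae_eq_G _ _ _ P (sigma_rvK SB)) => //.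
  - exact: sB.
  - exact: sigma_rvK_sigma.
  - move=> A GA; rewrite -eM // -eM' //; apply: eC; exact: s3.
apply: (negligibleS _ (@negl_bigU _ _ _ P _ _ hk)) => t /= ne.
apply/in_bigsetU; apply: contrapT => hn; move/negP: ne; apply; apply/eqP.
apply/funext => k; apply/eqP; apply: contrapT => /negP nk; apply: hn.
by exists k.
Qed.

Lemma int_h_eq : (\int[P]_t (h (mQB t))%:E = \int[P]_t (h (mCB t))%:E)%E.
Proof.
apply: (ae_eq_integral (EFin \o (fun t => h (mCB t)))) => //.
- by case/integrableP: i1.
- by case/integrableP: i3.
apply: (@negl_ae _ _ _ P _ _ mQB_mCB_negl) => t /= ne _.
by have -> : mQB t = mCB t by apply: contrapT => nt; apply: ne; apply/eqP.
Qed.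

Lemma part1 :
  (\int[P]_t (HQB t - h (mQB t))%:E
     = \int[P]_t (HQS t - h (C t))%:E + \int[P]_t (HCB t - h (mCB t))%:E)%E.
Proof.
case: hHQB => iQ iHQB _ eHQB.
case: hHQS => _ iHQS _ eHQS.
case: hHCB => iCc iHCB _ eHCB.
under eq_integral do rewrite EFinB.
under [X in (_ = X + _)%E]eq_integral do rewrite EFinB.
under [X in (_ = _ + X)%E]eq_integral do rewrite EFinB.
rewrite !integralB_EFin //.
rewrite -(eHQB _ (@sigma_rvK_setT _ _ _ _ SB)) -(eHQS _ (@sigma_rvK_setT _ _ _ _ S)).
rewrite -(eHCB _ (@sigma_rvK_setT _ _ _ _ SB)) int_h_eq.
have fa := integrable_fin_num measurableT iQ.
have fb := integrable_fin_num measurableT i3.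
have fc := integrable_fin_num measurableT i2.
rewrite -(fineK fa) -(fineK fb) -(fineK fc) -!EFinB -EFinD.
by rewrite addrA subrK.
Qed.


Lemma C_simplex_negl : P.-negligible [set t | ~ simplex K (C t)].
Proof.
have hneg k : P.-negligible [set t | C t k < 0].
  case: (hC k) => iQk iCk gC eC.
  apply: (@neg_negligible _ _ _ P (sigma_rvK S)) => //.
  - exact: s2.
  - move=> A GA; rewrite -eC //; apply: integral_ge0 => t _.
    by rewrite lee_fin; exact: (hQ t).1.
have isum : forall (V : 'I_K -> T -> R),
    (forall k, P.-integrable setT (EFin \o V k)) ->
    P.-integrable setT (EFin \o (fun t => \sum_k V k t)).
  move=> V hV; rewrite (_ : _ \o _ = fun t => \sum_k (V k t)%:E)%E; last first.
    by apply/funext => t /=; rewrite sumEFin.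
  by apply: integrable_sum => // k _; exact: hV.
have hsum : P.-negligible [set t | \sum_k C t k != 1].
  apply: (@ae_eq_G _ _ _ P (sigma_rvK S) _ (fun _ => 1)).
  - exact: s2.
  - exact: sigma_rvK_sigma.
  - apply: GmeasSum; [exact: sigma_rvK_sigma | by move=> k; case: (hC k)].
  - apply: GmeasC; exact: sigma_rvK_sigma.
  - by apply: isum => k; case: (hC k).
  - exact: finite_measure_integrable_cst.
  - move=> A GA; have mA := s2 _ GA.
    rewrite (_ : (fun t => _) = fun t => \sum_k (C t k)%:E)%E; last first.
      by apply/funext => t; rewrite sumEFin.
    rewrite integral_sum //; last first.
      by move=> k; case: (hC k) => _ iC _ _; exact: integrableS iC.
    transitivity (\sum_k \int[P]_(t in A) (Q t k)%:E)%E.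
      by apply: eq_bigr => k _; case: (hC k) => _ _ _ eC; rewrite eC.
    rewrite -integral_sum //; last first.
      by move=> k; case: (hC k) => iQ _ _ _; exact: integrableS iQ.
    by apply: eq_integral => t _; rewrite sumEFin (hQ t).2.
apply: (negligibleS _ (negligibleU (@negl_bigU _ _ _ P _ _ hneg) hsum)).
move=> t /= ns; apply: contrapT => /not_orP [h1 /negP /negPn /eqP h2].
apply: ns; split => // k.
by rewrite leNgt; apply/negP => hk; apply: h1; apply/in_bigsetU; exists k.
Qed.


Lemma piece_le (E : set T) : proper_scoring phi -> sigma_rvK SB E ->
  (forall s t, E s -> E t -> SB s = SB t) ->
  (\int[P]_(t in E) (h (mCB t))%:E <= \int[P]_(t in E) (h (C t))%:E)%E.
Proof.
move=> hp GE cE; have mE := sB _ GE.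
have mfC : measurable_fun E (EFin \o (fun t => h (C t))).
  by apply: (measurable_funS measurableT) => //; case/integrableP: i2.
have mfM : measurable_fun E (EFin \o (fun t => h (mCB t))).
  by apply: (measurable_funS measurableT) => //; case/integrableP: i3.
have [PE0|PE0] := eqVneq (P E) 0.
  by rewrite (ae_eq_integral (EFin \o (fun t => h (C t))) _ mE mfM mfC (ae_eq0 _ _ mE PE0)).
have [t0 Et0] : exists t0, E t0.
  apply: contrapT => ne; move/eqP: PE0; apply; rewrite (_ : E = set0) ?measure0 //.
  by apply/seteqP; split => t // Et; apply: ne; exists t.
set m := mCB t0.
have cm : forall s, E s -> mCB s = m.
  move=> s Es; apply/funext => k.
  case: (hmCB k) => _ _ gM _.
  have [A' hA' eA'] := gM [set m k] (measurable_set1 _).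
  have h0 : (SB @^-1` A') t0 by rewrite eA'.
  have : (SB @^-1` A') s by rewrite /= (cE _ _ Es Et0).
  by rewrite eA'.
have fPE : P E \is a fin_num := fin_num_measure P _ mE.
set pE := fine (P E).
have ePE : P E = pE%:E by rewrite fineK.
have pE0 : 0 < pE.
  rewrite lt_def; apply/andP; split; last by rewrite -lee_fin -ePE.
  by apply/eqP => e; move/eqP: PE0; apply; rewrite ePE e.
have intM k : (\int[P]_(t in E) (mCB t k)%:E = (m k * pE)%:E)%E.
  rewrite (eq_integral (cst (m k)%:E)); last by move=> t /set_mem Et; rewrite cm.
  by rewrite integral_cst // EFinM; congr (_ * _)%E; exact: ePE.
have eCQ k : (\int[P]_(t in E) (C t k)%:E = \int[P]_(t in E) (Q t k)%:E)%E.
  case: (hC k) => _ _ _ ee; rewrite (ee E) //; exact: s3 _ GE.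
have eMC k : (\int[P]_(t in E) (mCB t k)%:E = \int[P]_(t in E) (C t k)%:E)%E.
  by case: (hmCB k) => _ _ _ ee; rewrite (ee E).
have iQE k : P.-integrable E (EFin \o (fun t => Q t k)).
  by case: (hC k) => iQ _ _ _; exact: integrableS iQ.
have iCE k : P.-integrable E (EFin \o (fun t => C t k)).
  by case: (hC k) => _ iC _ _; exact: integrableS iC.
have msimp : simplex K m.
  split.
  - move=> k; have : (0 <= (m k * pE)%:E)%E.
      rewrite -intM eMC eCQ; apply: integral_ge0 => t _.
      by rewrite lee_fin; exact: (hQ t).1.
    by rewrite lee_fin pmulr_lge0.
  - have : ((\sum_k m k) * pE)%:E = pE%:E.
      rewrite mulr_suml -sumEFin.
      under eq_bigr do rewrite -intM eMC eCQ.
      rewrite -integral_sum //.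
      rewrite (eq_integral (cst 1%:E)); first by rewrite integral_cst // mul1e; exact: ePE.
      by move=> t _; rewrite sumEFin (hQ t).2.
    move=> hs; have hs' := EFin_inj hs.
    by apply: (mulIf (lt0r_neq0 pE0)); rewrite /= hs' mul1r.
have [N [mN PN sN]] := C_simplex_negl.
pose L t := \sum_k (- phi m k) * C t k.
have eLE : EFin \o L = (fun t => \sum_k ((- phi m k)%:E * (C t k)%:E))%E.
  apply/funext => t /=; rewrite /L -sumEFin.
  by apply: eq_bigr => k _; rewrite EFinM.
have iL : P.-integrable E (EFin \o L).
  rewrite eLE; apply: (integrable_sum mE) => k _.
  exact: integrableZl (iCE k).
have iC : P.-integrable E (EFin \o (fun t => h (C t))).
  exact: integrableS i2.
have eL : (\int[P]_(t in E) (L t)%:E = (h m * pE)%:E)%E.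
  rewrite (_ : (fun t => _) = EFin \o L) // eLE integral_sum //; last first.
    by move=> k; exact: integrableZl (iCE k).
  under eq_bigr => k _ do rewrite (integralZl mE (iCE k)) -eMC intM -EFinM.
  rewrite sumEFin; congr EFin.
  rewrite /h /hphi /s_phi mulNr mulr_suml -sumrN.
  by apply: eq_bigr => k _; rewrite mulNr mulrA.
have eH : (\int[P]_(t in E) (h (mCB t))%:E = (h m * pE)%:E)%E.
  rewrite (eq_integral (cst (h m)%:E)); last by move=> t /set_mem Et; rewrite /= cm.
  by rewrite integral_cst // EFinM; congr (_ * _)%E; exact: ePE.
rewrite eH -eL (negligible_integral mN mE iL PN).
rewrite [X in (_ <= X)%E](negligible_integral mN mE iC PN).
apply: (le_integral (measurableD mE mN)).
- by apply: (integrableS mE (measurableD mE mN) _ iL) => t [].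
- by apply: (integrableS mE (measurableD mE mN) _ iC) => t [].
move=> t /set_mem [Et Nt]; rewrite lee_fin.
have Cs : simplex K (C t) by apply: contrapT => ns; apply: Nt; exact: sN.
have := hp _ _ msimp Cs; rewrite /d_phi subr_ge0 => hle.
rewrite /L /h /hphi (_ : \sum_k _ = - s_phi phi m (C t)); first by rewrite lerN2.
by rewrite /s_phi -sumrN; apply: eq_bigr => k _; rewrite mulNr.
Qed.


Let Ep (j : 'I_J) : set T :=
  SB @^-1` ([set bm j] `\` \big[setU/set0]_(i < J | (i < j)%N) [set bm i]).

Lemma Ep_sig j : sigma_rvK SB (Ep j).
Proof.
exists ([set bm j] `\` \big[setU/set0]_(i < J | (i < j)%N) [set bm i]) => //.
rewrite borelKE; apply: measurableD; first by rewrite -borelKE; exact: borelK_set1.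
by apply: bigsetU_measurable => i _; rewrite -borelKE; exact: borelK_set1.
Qed.

Lemma Ep_const j s t : Ep j s -> Ep j t -> SB s = SB t.
Proof. by move=> [/= -> _] [/= -> _]. Qed.

Lemma Ep_cover t : exists j, Ep j t.
Proof.
have [j0 Bj0] := p1 t; have e0 := p3 _ _ Bj0.
suff : forall n (j : 'I_J), (j : nat) = n -> bm j = SB t -> exists j', Ep j' t.
  by move/(_ j0 j0 erefl); apply; rewrite e0.
elim/ltn_ind => n IH j jn ej.
have [[i [ij ei]]|nex] := pselect (exists i : 'I_J, (i < j)%N /\ bm i = SB t).
  by apply: (IH i) => //; rewrite -jn.
exists j; split => /=; first by rewrite ej.
by move/in_bigsetU => [i ij ei]; apply: nex; exists i; split => //; rewrite ei.
Qed.

Lemma Ep_disj i j t : Ep i t -> Ep j t -> i = j.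
Proof.
move=> [/= ei ni] [/= ej nj].
case: (ltngtP i j) => hij.
- by exfalso; apply: nj; apply/in_bigsetU; exists i.
- by exfalso; apply: ni; apply/in_bigsetU; exists j.
- exact: val_inj.
Qed.

Lemma part2 : proper_scoring phi ->
  (0 <= \int[P]_t (HCB t - h (mCB t))%:E)%E.
Proof.
move=> hp.
case: hHCB => iCc iHCB _ eHCB.
under eq_integral do rewrite EFinB.
rewrite integralB_EFin // -(eHCB _ (@sigma_rvK_setT _ _ _ _ SB)).
rewrite sube_ge0; last by rewrite (integrable_fin_num measurableT i3).
have hU : \big[setU/set0]_(j <- index_enum 'I_J) Ep j = setT.
  apply/seteqP; split => // t _; have [j Ej] := Ep_cover t.
  by apply/in_bigsetU; exists j.
have mEp j : measurable (Ep j) by apply: sB; exact: Ep_sig.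
have tE : trivIset [set` index_enum 'I_J] Ep.
  by move=> i j _ _ [t [Ei Ej]]; exact: Ep_disj Ei Ej.
have mU : forall g : T -> R, P.-integrable setT (EFin \o g) ->
    measurable_fun (\big[setU/set0]_(j <- index_enum 'I_J) Ep j) (EFin \o g).
  by move=> g ig; rewrite hU; case/integrableP: ig.
rewrite -hU.
rewrite (@integral_bigsetU_EFin _ _ _ P _ Ep (fun t => h (mCB t)) (index_enum 'I_J) mEp (index_enum_uniq _) tE (mU _ i3)).
rewrite (@integral_bigsetU_EFin _ _ _ P _ Ep (fun t => h (C t)) (index_enum 'I_J) mEp (index_enum_uniq _) tE (mU _ i2)).
apply: lee_sum => j _; apply: piece_le => //.
- exact: Ep_sig.
- exact: Ep_const.
Qed.

End Main.
Theorem proposition1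
  (R : realType) (d : measure_display) (T : measurableType d)
  (P : probability T R)
  (dX : measure_display) (Xsp : measurableType dX) (K J : nat)
  (X : T -> Xsp) (Y : T -> 'I_K)
  (f : Xsp -> 'I_K -> R)
  (phi : ('I_K -> R) -> 'I_K -> R)
  (B : 'I_J -> set ('I_K -> R))
  (Q C mQB mCB : T -> 'I_K -> R)
  (HQB HQS HCB : T -> R) :
  (* the data *)
  measurable_fun setT X ->
  (forall k, measurable (Y @^-1` [set k])) ->
  (forall x, simplex K (f x)) ->
  (forall A, borelK K A -> measurable (f @^-1` A)) ->
  (* Q_k = P(Y = e_k | X), Q in Delta_K *)
  (forall t, simplex K (Q t)) ->
  is_cexpK P (sigma_rv X) (fun t k => (Y t == k)%:R) Q ->
  (* {B_j} is a (Borel) partition of Delta_K *)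
  (forall j, borelK K (B j)) ->
  (forall j, B j `<=` simplex K) ->
  (forall i j, i != j -> B i `&` B j = set0) ->
  (forall p, simplex K p -> exists j, B j p) ->
  let S := fun t => f (X t) in
  let SB := binned P S B in
  let h := hphi phi in
  (* C = E[Q | S] *)
  is_cexpK P (sigma_rvK S) Q C ->
  (* the conditional expectations appearing in Var_h(.|.) *)
  is_cexp P (sigma_rvK SB) (fun t => h (Q t)) HQB ->
  is_cexpK P (sigma_rvK SB) Q mQB ->
  is_cexp P (sigma_rvK S) (fun t => h (Q t)) HQS ->
  is_cexp P (sigma_rvK SB) (fun t => h (C t)) HCB ->
  is_cexpK P (sigma_rvK SB) C mCB ->
  (* the remaining required expectations exist *)
  P.-integrable setT (EFin \o (fun t => h (mQB t))) ->
  P.-integrable setT (EFin \o (fun t => h (C t))) ->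
  P.-integrable setT (EFin \o (fun t => h (mCB t))) ->
  (\int[P]_t (HQB t - h (mQB t))%:E
     = \int[P]_t (HQS t - h (C t))%:E + \int[P]_t (HCB t - h (mCB t))%:E)%E
  /\ (proper_scoring phi -> (0 <= \int[P]_t (HCB t - h (mCB t))%:E)%E).
Proof.
move=> hX hY hf hfm hQ hQc hBb hBs hBd hBc S SB h hC hHQB hmQB hHQS hHCB hmCB i1 i2 i3.
split.
- exact (@part1 _ _ _ P _ _ _ _ X f phi B Q C mQB mCB HQB HQS HCB hX hf hfm hBb hBd hBc hC hHQB hmQB hHQS hHCB hmCB i1 i2 i3).
- exact (@part2 _ _ _ P _ _ _ _ X f phi B Q C mCB HCB hX hf hfm hQ hBb hBd hBc hC hHCB hmCB i2 i3).
Qed.
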